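(* For all integers $s\ge2$ and $m\ge s+1$, the tight cycle $C_m^{(s)}$ is edge-balanced.
   Context: The tight cycle $C_m^{(s)}$ is the $s$-uniform hypergraph with vertices $v_1,\dots,v_m$ in cyclic order and the $m$ edges $\{v_i,v_{i+1},\dots,v_{i+s-1}\}$, $i=1,\dots,m$, indices modulo $m$. For an $s$-graph $F$ with $v_F$ vertices and $e_F\ge1$ edges, $g(F)=1/s$ if $e_F=1$ and $g(F)=\frac{e_F-1}{v_F-s}$ if $e_F>1$. $F$ is edge-balanced if every sub-hypergraph $F'\subseteq F$ with $e_{F'}>0$ satisfies $g(F')\le g(F)$. *)

(* Defs.v *)
From mathcomp Require Import all_boot all_order all_algebra.
Set Implicit Arguments. Unset Strict Implicit. Unset Printing Implicit Defensive.
Import Order.TTheory GRing.Theory Num.Theory.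

(* An s-graph (s-uniform hypergraph) is given by a vertex set V and an edge set E,
   both over a finite ground type T; edges are sets of size s. *)

Definition gdens (T : finType) (s : nat) (V : {set T}) (E : {set {set T}}) : rat :=
  if #|E| == 1%N then ((s%:R)^-1)%R
  else ((#|E|%:R - 1) / (#|V|%:R - s%:R))%R.

Definition subhypergraph (T : finType) (V' : {set T}) (E' : {set {set T}})
  (V : {set T}) (E : {set {set T}}) : Prop :=
  [/\ V' \subset V, E' \subset E & forall e, e \in E' -> e \subset V'].

Definition edge_balanced (T : finType) (s : nat) (V : {set T}) (E : {set {set T}}) : Prop :=
  forall (V' : {set T}) (E' : {set {set T}}),
    subhypergraph V' E' V E -> (0 < #|E'|)%N -> (gdens s V' E' <= gdens s V E)%R.

(* Tight cycle C_m^(s) on vertices 'I_m (v_1,...,v_m = 0,...,m-1 in cyclic order):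
   edge i is {i, i+1, ..., i+s-1} (mod m). *)
Definition tight_edge (m s : nat) (i : 'I_m) : {set 'I_m} :=
  [set j : 'I_m | ((j + m - i) %% m < s)%N].

Definition tight_cycle_edges (m s : nat) : {set {set 'I_m}} :=
  [set tight_edge s i | i : 'I_m].

(* Main.v *)
Require Import Defs.
From mathcomp Require Import all_boot all_order all_algebra.
From mathcomp Require Import zify.
Import Order.TTheory GRing.Theory Num.Theory.

Lemma modm_eq (m x y : nat) : x < m -> y <= m ->
  (x + m - y) %% m = if y <= x then x - y else x + m - y.
Proof.
move=> xm ym; case: ifP => h.
  have -> : x + m - y = (x - y) + m by lia.
  by rewrite modnDr modn_small //; lia.
by rewrite modn_small //; lia.
Qed.

Lemma modm_add (m x y : nat) : x < m -> y <= m ->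
  (x + y) %% m = if x + y < m then x + y else x + y - m.
Proof.
move=> xm ym; case: ifP => h; first by rewrite modn_small.
have -> : x + y = (x + y - m) + m by lia.
rewrite modnDr modn_small; lia.
Qed.

Lemma ratle (a b c d : nat) : (0 < b)%N -> (0 < d)%N -> (a * d <= c * b)%N ->
  (a%:R / b%:R <= c%:R / d%:R :> rat)%R.
Proof.
move=> b0 d0 h.
rewrite ler_pdivrMr ?ltr0n // mulrAC ler_pdivlMr ?ltr0n // -!natrM ler_nat.
by [].
Qed.

Ltac ifs := repeat match goal with |- context[if ?b then _ else _] =>
  let H := fresh in case: ifP => H; [ | move/negbT: H => H] end.

Lemma mem_edge (m s : nat) (i j : 'I_m) :
  (j \in tight_edge s i) = ((j + m - i) %% m < s).
Proof. by rewrite inE. Qed.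

Theorem claim21 (s m : nat) :
  (2 <= s)%N -> (s.+1 <= m)%N ->
  edge_balanced s [set: 'I_m] (tight_cycle_edges m s).
Proof.
move=> hs hm V' E' [_ sE' sub] e0.
have m0 : 0 < m by lia.
have cardE : #|tight_cycle_edges m s| = m.
  rewrite card_imset ?card_ord // => i i' eq.
  apply/eqP; apply/negPn/negP => /eqP neq.
  have neq' : (i : nat) <> i' by move=> h; apply: neq; apply: val_inj.
  have ltm := ltn_ord i; have ltm' := ltn_ord i'.
  have ii : i \in tight_edge s i'.
    rewrite -eq mem_edge modm_eq //; last by apply: ltnW.
    ifs; lia.
  move: ii; rewrite mem_edge modm_eq //; last by apply: ltnW.
  move=> ii.
  pose p : 'I_m := Ordinal (ltn_pmod (i + m - 1) m0).
  have hp : (p : nat) = if 1 <= i then i - 1 else i + m - 1 by rewrite /= modm_eq.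
  have ltp := ltn_ord p.
  have : p \in tight_edge s i'.
    rewrite mem_edge modm_eq //; last by apply: ltnW.
    move: hp ii; ifs; lia.
  rewrite -eq mem_edge modm_eq //; last by apply: ltnW.
  move: hp; ifs; lia.
set S := [set i : 'I_m | tight_edge s i \in E'].
have hES : #|E'| <= #|S|.
  have sub2 : E' \subset tight_edge s @: S.
    apply/subsetP => e he.
    have := subsetP sE' e he; case/imsetP => i _ ei.
    by apply/imsetP; exists i => //; rewrite inE -ei.
  exact: leq_trans (subset_leq_card sub2) (leq_imset_card _ _).
have hU : forall (i j : 'I_m), i \in S -> (j + m - i) %% m < s -> j \in V'.
  move=> i j; rewrite inE => /sub /subsetP h hj; apply: h; by rewrite mem_edge.
have hVm : #|V'| <= m by have := max_card (mem V'); rewrite card_ord.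
have hSm : #|S| <= m by have := max_card (mem S); rewrite card_ord.
have key : #|V'| = m \/ #|S| + s.-1 <= #|V'|.
  case: (boolP ([set: 'I_m] \subset V')) => [hall | notall].
    left; apply/eqP; rewrite eqn_leq hVm /=.
    by have := subset_leq_card hall; rewrite cardsT card_ord.
  right.
  case/subsetPn: notall => a _ naV.
  have : 0 < #|S| by lia.
  case/card_gt0P => b0 b0S.
  pose d (x : 'I_m) := (a + m - x) %% m.
  case: (arg_minnP d b0S) => b bS bmin.
  have lta := ltn_ord a; have ltb := ltn_ord b.
  have ds : s <= d b.
    rewrite leqNgt; apply/negP => h; move/negP: naV; apply; exact: hU b a bS h.
  pose c (k : 'I_s.-1) : 'I_m := Ordinal (ltn_pmod (b + k.+1) m0).
  have hc : forall k : 'I_s.-1, (c k : nat) = if b + k.+1 < m then b + k.+1 else b + k.+1 - m.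
    move=> k; rewrite /= modm_add //; have := ltn_ord k; lia.
  have cinj : injective c.
    move=> k k' ekk; apply: val_inj => /=.
    have := hc k; have := hc k'; rewrite ekk.
    have := ltn_ord k; have := ltn_ord k'; ifs; lia.
  have cV : forall k, c k \in V'.
    move=> k; apply: (hU b) => //.
    rewrite modm_eq //; last by apply: ltnW.
    have := hc k; have := ltn_ord k; ifs; lia.
  have cS : forall k, c k \notin S.
    move=> k; apply/negP => /bmin.
    move: ds; rewrite /d modm_eq //; last by apply: ltnW.
    rewrite modm_eq //; last by apply: ltnW.
    have := hc k; have := ltn_ord k; have := ltn_ord (c k); ifs; lia.
  set C := [set c k | k : 'I_s.-1].
  have cardC : #|C| = s.-1 by rewrite card_imset // card_ord.
  have dis : S :&: C = set0.
    apply/setP => x; rewrite in_set0; apply/negP => /setIP [xS /imsetP [k _ xk]].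
    by move: xS; rewrite xk (negbTE (cS k)).
  have sUV : S :|: C \subset V'.
    apply/subsetP => x; rewrite inE => /orP [xS | /imsetP [k _ ->]]; last exact: cV.
    apply: (hU x) => //; rewrite modm_eq //; last by apply: ltnW.
    ifs; lia.
  have := subset_leq_card sUV; have := cardsUI S C; rewrite dis cards0 cardC; by rewrite addn0 => <-.
rewrite /gdens cardE cardsT card_ord.
rewrite (_ : (m == 1) = false); last by apply/negbTE/eqP; lia.
have -> : (m%:R - 1 : rat)%R = (m - 1)%:R%R by rewrite natrB //; lia.
have -> : (m%:R - s%:R : rat)%R = (m - s)%:R%R by rewrite natrB //; lia.
case: eqP => he1.
  rewrite -[(s%:R^-1)%R]mul1r.
  apply: (ratle 1); try lia.
have sv : s <= #|V'| by case: key; lia.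
have -> : (#|E'|%:R - 1 : rat)%R = (#|E'| - 1)%:R%R by rewrite natrB //; lia.
have -> : (#|V'|%:R - s%:R : rat)%R = (#|V'| - s)%:R%R by rewrite natrB //; lia.
case: key => hk.
  rewrite hk; apply: ratle; try lia.
  by apply: leq_mul; lia.
apply: ratle; try lia.
rewrite mulnC; apply: leq_mul; lia.
Qed.
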